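(* Let $r>1$. For a positive integer $x$, let $q_r(x,x)$ be the probability that the CA competition process with fitness ratio $r$ started at $(x,x)$ satisfies $X_t\ne Y_t$ for all $t\ge1$. Then \[ q_r(x,x)\to\frac{r-1}{r+1}\quad\text{as } x\to\infty. \]
   Context: The CA competition process with fitness ratio $r\ge 1$ started at $(x_0,y_0)$ is the discrete-time Markov chain $\{(X_t,Y_t)\}_{t\ge0}$ on $\{(x,y)\in\mathbb{Z}^2: x\ge1,y\ge1\}$ with $(X_0,Y_0)=(x_0,y_0)$ and transition probabilities: from $(x,y)$ it moves to $(x+1,y)$ with probability $\frac{rx}{rx+y}$ and to $(x,y+1)$ with probability $\frac{y}{rx+y}$. *)

(* Defs.v *)
From Stdlib Require Import Reals.
From Coquelicot Require Import Coquelicot.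
Open Scope R_scope.

Definition p_right (r : R) (x y : nat) : R := r * INR x / (r * INR x + INR y).
Definition p_up (r : R) (x y : nat) : R := INR y / (r * INR x + INR y).

(* avoid_n r n x y = probability that the chain started at (x,y)
   satisfies X_t <> Y_t for all 1 <= t <= n (first-step decomposition
   of the law of the Markov chain). *)
Fixpoint avoid_n (r : R) (n : nat) (x y : nat) : R :=
  match n with
  | O => 1
  | S m =>
      p_right r x y * (if Nat.eqb (S x) y then 0 else avoid_n r m (S x) y)
    + p_up r x y * (if Nat.eqb x (S y) then 0 else avoid_n r m x (S y))
  end.

(* q_r(x,y) = P(X_t <> Y_t for all t >= 1), obtained by continuity of
   probability from above along the decreasing events
   {X_t <> Y_t for 1 <= t <= n}. *)
Definition q (r : R) (x y : nat) : R := real (Lim_seq (fun n => avoid_n r n x y)).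

(* Main.v *)
Require Import Defs.
From Stdlib Require Import Reals Lra Lia Psatz.
From Coquelicot Require Import Coquelicot.
Open Scope R_scope.

Lemma avoid_S r n x y : avoid_n r (S n) x y =
  p_right r x y * (if Nat.eqb (S x) y then 0 else avoid_n r n (S x) y)
  + p_up r x y * (if Nat.eqb x (S y) then 0 else avoid_n r n x (S y)).
Proof. reflexivity. Qed.

Lemma probs r x y : 0 < r -> (1 <= x)%nat ->
  0 <= p_right r x y /\ 0 <= p_up r x y /\ p_right r x y + p_up r x y = 1.
Proof.
  intros Hr Hx. unfold p_right, p_up.
  assert (0 < INR x) by (apply lt_0_INR; lia).
  assert (0 <= INR y) by apply pos_INR.
  assert (0 < r * INR x + INR y) by nra.
  repeat split.
  - apply Rdiv_le_0_compat; nra.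
  - apply Rdiv_le_0_compat; lra.
  - field. lra.
Qed.

Lemma avoid_bounds r n : 0 < r -> forall x y, (1 <= x)%nat ->
  0 <= avoid_n r n x y <= 1.
Proof.
  intros Hr. induction n as [|n IH]; intros x y Hx.
  - simpl; lra.
  - rewrite avoid_S. destruct (probs r x y Hr Hx) as [h1 [h2 h3]].
    assert (A : 0 <= (if Nat.eqb (S x) y then 0 else avoid_n r n (S x) y) <= 1).
    { destruct (Nat.eqb (S x) y); [lra| apply IH; lia]. }
    assert (B : 0 <= (if Nat.eqb x (S y) then 0 else avoid_n r n x (S y)) <= 1).
    { destruct (Nat.eqb x (S y)); [lra| apply IH; lia]. }
    split; nra.
Qed.

Lemma pr_pu_ratio r x y c : 0 < r -> (1 <= x)%nat ->
  c * (r * INR x) <= INR y -> p_right r x y * c <= p_up r x y.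
Proof.
  intros Hr Hx H. unfold p_right, p_up.
  assert (0 < INR x) by (apply lt_0_INR; lia).
  assert (0 <= INR y) by apply pos_INR.
  assert (0 < r * INR x + INR y) by nra.
  unfold Rdiv. apply Rle_trans with (c * (r * INR x) * / (r * INR x + INR y)).
  - right; ring.
  - apply Rmult_le_compat_r; [left; apply Rinv_0_lt_compat; lra| exact H].
Qed.

Lemma pu_pr_ratio r x y c : 0 < r -> (1 <= x)%nat ->
  c * INR y <= r * INR x -> p_up r x y * c <= p_right r x y.
Proof.
  intros Hr Hx H. unfold p_right, p_up.
  assert (0 < INR x) by (apply lt_0_INR; lia).
  assert (0 <= INR y) by apply pos_INR.
  assert (0 < r * INR x + INR y) by nra.
  unfold Rdiv. apply Rle_trans with (c * INR y * / (r * INR x + INR y)).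
  - right; ring.
  - apply Rmult_le_compat_r; [left; apply Rinv_0_lt_compat; lra| exact H].
Qed.

Lemma alg_sub rho a b k : a + b = 1 -> 0 <= a -> 0 <= b -> 0 <= rho <= 1 ->
  b <= a * rho -> 1 - rho ^ (S k) <= a * (1 - rho ^ (S (S k))) + b * (1 - rho ^ k).
Proof.
  intros Hab Ha Hb Hr H. simpl. set (t := rho ^ k).
  assert (0 <= t) by (apply pow_le; lra).
  assert (0 <= t * ((1 - rho) * (a * rho - b))) by (apply Rmult_le_pos; [lra| apply Rmult_le_pos; lra]).
  replace b with (1 - a) in * by lra. nra.
Qed.

Lemma alg_sup rho a b k : a + b = 1 -> 0 <= a -> 0 <= b -> 0 <= rho <= 1 ->
  a * rho <= b -> a * (1 - rho ^ (S (S k))) + b * (1 - rho ^ k) <= 1 - rho ^ (S k).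
Proof.
  intros Hab Ha Hb Hr H. simpl. set (t := rho ^ k).
  assert (0 <= t) by (apply pow_le; lra).
  assert (0 <= t * ((1 - rho) * (b - a * rho))) by (apply Rmult_le_pos; [lra| apply Rmult_le_pos; lra]).
  replace b with (1 - a) in * by lra. nra.
Qed.

Lemma alg_neg tau a b k : a + b = 1 -> 0 <= a -> 0 <= b -> 1 <= tau ->
  b * tau <= a -> a * (tau ^ k - 1) + b * (tau ^ (S (S k)) - 1) <= tau ^ (S k) - 1.
Proof.
  intros Hab Ha Hb Hr H. simpl. set (t := tau ^ k).
  assert (0 <= t) by (apply pow_le; lra).
  assert (0 <= t * ((tau - 1) * (a - b * tau))) by (apply Rmult_le_pos; [lra| apply Rmult_le_pos; lra]).
  replace b with (1 - a) in * by lra. nra.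
Qed.

Lemma alg_psi_pos beta mu a b k : 1 < beta -> 0 <= a -> 0 <= b ->
  a / beta + b * beta <= mu ->
  a * (/ beta) ^ (S (S k)) + b * (/ beta) ^ k <= mu * (/ beta) ^ (S k).
Proof.
  intros Hb Ha Hb' H. simpl. set (t := (/ beta) ^ k).
  assert (0 <= t) by (apply pow_le; left; apply Rinv_0_lt_compat; lra).
  assert (E : a * (/ beta * (/ beta * t)) + b * t = (/beta * t) * (a / beta + b * beta)) by (field; lra).
  rewrite E. assert (0 <= /beta * t) by (apply Rmult_le_pos; [left; apply Rinv_0_lt_compat; lra| lra]).
  rewrite (Rmult_comm mu). apply Rmult_le_compat_l; lra.
Qed.

Lemma alg_psi_neg beta mu a b k : 1 < beta -> 0 <= a -> 0 <= b ->
  a / beta + b * beta <= mu ->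
  a * beta ^ k + b * beta ^ (S (S k)) <= mu * beta ^ (S k).
Proof.
  intros Hb Ha Hb' H. simpl. set (t := beta ^ k).
  assert (0 <= t) by (apply pow_le; lra).
  assert (E : a * t + b * (beta * (beta * t)) = (beta * t) * (a / beta + b * beta)) by (field; lra).
  rewrite E. assert (0 <= beta * t) by (apply Rmult_le_pos; lra).
  rewrite (Rmult_comm mu). apply Rmult_le_compat_l; lra.
Qed.

Lemma lowerPos r (Hr : 1 < r) : forall n y d, (1 <= y + S d)%nat ->
  1 - (/ r) ^ (S d) <= avoid_n r n (y + S d) y.
Proof.
  assert (Hi : 0 < / r < 1) by (split; [apply Rinv_0_lt_compat; lra| replace 1 with (/ 1) by apply Rinv_1; apply Rinv_lt_contravar; lra]).
  induction n as [|n IH]; intros y d Hx.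
  - simpl avoid_n. assert (0 <= (/ r) ^ (S d)) by (apply pow_le; lra). lra.
  - rewrite avoid_S. destruct (probs r (y + S d) y ltac:(lra) Hx) as [h1 [h2 h3]].
    replace (Nat.eqb (S (y + S d)) y) with false by (symmetry; apply Nat.eqb_neq; lia).
    replace (avoid_n r n (S (y + S d)) y) with (avoid_n r n (y + S (S d)) y) by (f_equal; lia).
    assert (HA := IH y (S d) ltac:(lia)).
    assert (Hc : p_up r (y + S d) y * r <= p_right r (y + S d) y).
    { apply pu_pr_ratio; [lra| lia|]. rewrite plus_INR. assert (0 <= INR y) by apply pos_INR.
      assert (0 <= INR (S d)) by apply pos_INR. nra. }
    assert (Hc' : p_up r (y + S d) y <= p_right r (y + S d) y * / r).
    { apply Rmult_le_reg_r with r; [lra|]. rewrite Rmult_assoc, Rinv_l; lra. }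
    destruct d as [|d'].
    + replace (Nat.eqb (y + 1) (S y)) with true by (symmetry; apply Nat.eqb_eq; lia).
      pose proof (alg_sub (/ r) (p_right r (y+1) y) (p_up r (y+1) y) 0 h3 h1 h2 ltac:(lra) Hc').
      simpl pow in *. nra.
    + replace (Nat.eqb (y + S (S d')) (S y)) with false by (symmetry; apply Nat.eqb_neq; lia).
      replace (avoid_n r n (y + S (S d')) (S y)) with (avoid_n r n (S y + S d') (S y)) by (f_equal; lia).
      assert (HB := IH (S y) d' ltac:(lia)).
      pose proof (alg_sub (/ r) _ _ (S d') h3 h1 h2 ltac:(lra) Hc').
      nra.
Qed.

Lemma lower_diag r (Hr : 1 < r) : forall n x, (1 <= x)%nat ->
  (r - 1) / (r + 1) <= avoid_n r n x x.
Proof.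
  intros [|n] x Hx.
  - simpl. apply Rmult_le_reg_r with (r + 1); [lra|]. unfold Rdiv. rewrite Rmult_assoc, Rinv_l; lra.
  - rewrite avoid_S. destruct (probs r x x ltac:(lra) Hx) as [h1 [h2 h3]].
    replace (Nat.eqb (S x) x) with false by (symmetry; apply Nat.eqb_neq; lia).
    replace (Nat.eqb x (S x)) with false by (symmetry; apply Nat.eqb_neq; lia).
    replace (avoid_n r n (S x) x) with (avoid_n r n (x + S 0) x) by (f_equal; lia).
    assert (HA := lowerPos r Hr n x 0 ltac:(lia)).
    assert (HB := avoid_bounds r n ltac:(lra) x (S x) Hx).
    assert (Hp : p_right r x x = r / (r + 1)).
    { unfold p_right. assert (0 < INR x) by (apply lt_0_INR; lia). field. split; nra. }
    assert (E : (r - 1) / (r + 1) = r / (r + 1) * (1 - (/ r) ^ 1)) by (simpl; field; lra).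
    rewrite E, <- Hp. nra.
Qed.

Definition gp (rho : R) (K j : nat) : R :=
  if Nat.leb K j then 1 else (1 - rho ^ j) / (1 - rho ^ K).
Definition gn (tau : R) (K j : nat) : R :=
  if Nat.leb K j then 1 else (tau ^ j - 1) / (tau ^ K - 1).

Lemma pow_le_one rho j : 0 <= rho <= 1 -> rho ^ j <= 1.
Proof. intros H. induction j; simpl; [lra|]. nra. Qed.

Lemma gp_form rho K j : 0 <= rho < 1 -> (1 <= K)%nat -> (j <= K)%nat ->
  gp rho K j = (1 - rho ^ j) / (1 - rho ^ K).
Proof.
  intros Hr HK Hj. unfold gp. assert (0 <= rho ^ K < 1) by (apply pow_lt_1_compat; [lra|lia]).
  destruct (Nat.leb K j) eqn:E.
  - apply Nat.leb_le in E. replace j with K by lia. field. lra.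
  - reflexivity.
Qed.

Lemma tau_pow_gt tau K : 1 < tau -> (1 <= K)%nat -> 1 < tau ^ K.
Proof.
  intros Hr HK. destruct K as [|K]; [lia|]. simpl. assert (1 <= tau ^ K) by (apply pow_R1_Rle; lra). nra.
Qed.

Lemma gn_form tau K j : 1 < tau -> (1 <= K)%nat -> (j <= K)%nat ->
  gn tau K j = (tau ^ j - 1) / (tau ^ K - 1).
Proof.
  intros Hr HK Hj. unfold gn. assert (1 < tau ^ K) by (apply tau_pow_gt; [lra|lia]).
  destruct (Nat.leb K j) eqn:E.
  - apply Nat.leb_le in E. replace j with K by lia. field. lra.
  - reflexivity.
Qed.

Lemma gp_nonneg rho K j : 0 <= rho < 1 -> 0 <= gp rho K j.
Proof.
  intros Hr. unfold gp. destruct (Nat.leb K j) eqn:E; [lra|].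
  apply Nat.leb_gt in E.
  assert (0 <= rho ^ K < 1) by (apply pow_lt_1_compat; [lra|lia]).
  assert (rho ^ j <= 1) by (apply pow_le_one; lra).
  apply Rdiv_le_0_compat; lra.
Qed.

Lemma gn_nonneg tau K j : 1 < tau -> 0 <= gn tau K j.
Proof.
  intros Hr. unfold gn. destruct (Nat.leb K j) eqn:E; [lra|].
  apply Nat.leb_gt in E.
  assert (1 < tau ^ K) by (apply tau_pow_gt; [lra|lia]).
  assert (1 <= tau ^ j) by (apply pow_R1_Rle; lra).
  apply Rdiv_le_0_compat; lra.
Qed.

Lemma comb a b A B gA gB pA pB g0 p0 m M mu : 0 <= a -> 0 <= b ->
  A <= gA + m * M * pA -> B <= gB + m * M * pB -> a * gA + b * gB <= g0 ->
  a * pA + b * pB <= mu * p0 -> 0 <= m * M ->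
  a * A + b * B <= g0 + (mu * m) * M * p0.
Proof.
  intros Ha Hb HA HB Hg Hp Hm.
  assert (a * A <= a * (gA + m * M * pA)) by (apply Rmult_le_compat_l; lra).
  assert (b * B <= b * (gB + m * M * pB)) by (apply Rmult_le_compat_l; lra).
  assert ((m * M) * (a * pA + b * pB) <= (m * M) * (mu * p0)) by (apply Rmult_le_compat_l; lra).
  nra.
Qed.

Lemma divc a b u v w c : 0 < c -> a * u + b * v <= w -> a * (u / c) + b * (v / c) <= w / c.
Proof.
  intros Hc H. replace (a * (u / c) + b * (v / c)) with ((a * u + b * v) / c) by (field; lra).
  unfold Rdiv. apply Rmult_le_compat_r; [left; apply Rinv_0_lt_compat; lra| lra].
Qed.

Lemma posU r rho K beta mu M x0 theta :
  1 < r -> (1 <= x0)%nat -> 0 <= rho < 1 -> 1 < beta -> 0 <= mu -> 0 <= M -> theta <= r ->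
  (forall a b, 0 <= a -> 0 <= b -> a + b = 1 -> theta * b <= a -> a / beta + b * beta <= mu) ->
  (forall j, (j < K)%nat -> 1 <= M * (/ beta) ^ j) ->
  (forall y d, (x0 <= y + S d)%nat -> (S d < K)%nat -> rho * (r * INR (y + S d)) <= INR y) ->
  forall n y d, (x0 <= y + S d)%nat ->
  avoid_n r n (y + S d) y <= gp rho K (S d) + mu ^ n * M * (/ beta) ^ (S d).
Proof.
  intros Hr Hx0 Hrho Hb Hmu HM Ht Hmu' HMj Hrho'.
  assert (Hi : 0 <= / beta) by (left; apply Rinv_0_lt_compat; lra).
  induction n as [|n IH]; intros y d Hx.
  - simpl avoid_n. rewrite pow_O. unfold gp. destruct (Nat.leb K (S d)) eqn:E.
    + assert (0 <= (/ beta) ^ S d) by (apply pow_le; lra). nra.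
    + apply Nat.leb_gt in E. pose proof (HMj (S d) E).
      pose proof (gp_nonneg rho K (S d) Hrho) as G. unfold gp in G.
      replace (Nat.leb K (S d)) with false in G by (symmetry; apply Nat.leb_gt; lia).
      assert (0 <= (/ beta) ^ S d) by (apply pow_le; lra). nra.
  - assert (Hpow : 0 <= mu ^ S n * M * (/ beta) ^ S d).
    { apply Rmult_le_pos; [apply Rmult_le_pos; [apply pow_le; lra| lra]| apply pow_le; lra]. }
    destruct (Compare_dec.le_lt_dec K (S d)) as [HK|HK].
    + unfold gp. replace (Nat.leb K (S d)) with true by (symmetry; apply Nat.leb_le; lia).
      pose proof (avoid_bounds r (S n) ltac:(lra) (y + S d) y ltac:(lia)). lra.
    + rewrite avoid_S. destruct (probs r (y + S d) y ltac:(lra) ltac:(lia)) as [h1 [h2 h3]].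
      replace (Nat.eqb (S (y + S d)) y) with false by (symmetry; apply Nat.eqb_neq; lia).
      replace (avoid_n r n (S (y + S d)) y) with (avoid_n r n (y + S (S d)) y) by (f_equal; lia).
      assert (HA := IH y (S d) ltac:(lia)).
      assert (Hc1 : p_right r (y + S d) y * rho <= p_up r (y + S d) y).
      { apply pr_pu_ratio; [lra| lia|]. apply Hrho'; lia. }
      assert (Hc2 : p_up r (y + S d) y * theta <= p_right r (y + S d) y).
      { apply pu_pr_ratio; [lra| lia|]. rewrite plus_INR. assert (0 <= INR y) by apply pos_INR.
        assert (0 <= INR (S d)) by apply pos_INR. nra. }
      assert (Hmu2 := Hmu' _ _ h1 h2 h3 ltac:(lra)).
      assert (HmM : 0 <= mu ^ n * M) by (apply Rmult_le_pos; [apply pow_le; lra| lra]).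
      assert (HB : (if Nat.eqb (y + S d) (S y) then 0 else avoid_n r n (y + S d) (S y))
                   <= gp rho K d + mu ^ n * M * (/ beta) ^ d).
      { destruct d as [|d'].
        - replace (Nat.eqb (y + 1) (S y)) with true by (symmetry; apply Nat.eqb_eq; lia).
          rewrite gp_form by (first [exact Hrho | lia]). simpl pow. nra.
        - replace (Nat.eqb (y + S (S d')) (S y)) with false by (symmetry; apply Nat.eqb_neq; lia).
          replace (avoid_n r n (y + S (S d')) (S y)) with (avoid_n r n (S y + S d') (S y)) by (f_equal; lia).
          apply IH; lia. }
      replace (mu ^ S n) with (mu * mu ^ n) by reflexivity.
      apply comb with (gA := gp rho K (S (S d))) (gB := gp rho K d)
                      (pA := (/ beta) ^ (S (S d))) (pB := (/ beta) ^ d); auto.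
      * rewrite !gp_form by (first [exact Hrho | lia]). apply divc.
        { assert (0 <= rho ^ K < 1) by (apply pow_lt_1_compat; [lra|lia]). lra. }
        apply alg_sup; auto; lra.
      * apply alg_psi_pos; auto.
Qed.

Lemma negU r tau beta mu K x0 :
  1 < r -> (1 <= x0)%nat -> 1 < tau -> 1 < beta -> 0 <= mu ->
  (forall a b, 0 <= a -> 0 <= b -> a + b = 1 -> tau * b <= a -> a / beta + b * beta <= mu) ->
  (forall x e, (x0 <= x)%nat -> (S e < K)%nat -> tau * INR (x + S e) <= r * INR x) ->
  forall n x e, (x0 <= x)%nat ->
  avoid_n r n x (x + S e) <= gn tau K (S e) + mu ^ n * 1 * beta ^ (S e).
Proof.
  intros Hr Hx0 Htau Hb Hmu Hmu' Htau'.
  induction n as [|n IH]; intros x e Hx.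
  - simpl avoid_n. rewrite pow_O. pose proof (gn_nonneg tau K (S e) Htau).
    assert (1 <= beta ^ S e) by (apply pow_R1_Rle; lra). lra.
  - assert (Hpow : 0 <= mu ^ S n * 1 * beta ^ S e).
    { apply Rmult_le_pos; [apply Rmult_le_pos; [apply pow_le; lra| lra]| apply pow_le; lra]. }
    destruct (Compare_dec.le_lt_dec K (S e)) as [HK|HK].
    + unfold gn. replace (Nat.leb K (S e)) with true by (symmetry; apply Nat.leb_le; lia).
      pose proof (avoid_bounds r (S n) ltac:(lra) x (x + S e) ltac:(lia)). lra.
    + rewrite avoid_S. destruct (probs r x (x + S e) ltac:(lra) ltac:(lia)) as [h1 [h2 h3]].
      replace (Nat.eqb x (S (x + S e))) with false by (symmetry; apply Nat.eqb_neq; lia).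
      replace (avoid_n r n x (S (x + S e))) with (avoid_n r n x (x + S (S e))) by (f_equal; lia).
      assert (HB := IH x (S e) ltac:(lia)).
      assert (Hc : p_up r x (x + S e) * tau <= p_right r x (x + S e)).
      { apply pu_pr_ratio; [lra| lia|]. apply Htau'; lia. }
      assert (Hmu2 := Hmu' _ _ h1 h2 h3 ltac:(lra)).
      assert (HmM : 0 <= mu ^ n * 1) by (apply Rmult_le_pos; [apply pow_le; lra| lra]).
      assert (HA : (if Nat.eqb (S x) (x + S e) then 0 else avoid_n r n (S x) (x + S e))
                   <= gn tau K e + mu ^ n * 1 * beta ^ e).
      { destruct e as [|e'].
        - replace (Nat.eqb (S x) (x + 1)) with true by (symmetry; apply Nat.eqb_eq; lia).
          rewrite gn_form by (first [lra | lia]). simpl pow. nra.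
        - replace (Nat.eqb (S x) (x + S (S e'))) with false by (symmetry; apply Nat.eqb_neq; lia).
          replace (avoid_n r n (S x) (x + S (S e'))) with (avoid_n r n (S x) (S x + S e')) by (f_equal; lia).
          apply IH; lia. }
      replace (mu ^ S n) with (mu * mu ^ n) by reflexivity.
      apply comb with (gA := gn tau K e) (gB := gn tau K (S (S e)))
                      (pA := beta ^ e) (pB := beta ^ (S (S e))); auto.
      * rewrite !gn_form by (first [lra | lia]). apply divc.
        { assert (1 < tau ^ K) by (apply tau_pow_gt; [lra|lia]). lra. }
        apply alg_neg; auto; lra.
      * apply alg_psi_neg; auto.
Qed.

Lemma lim_sandwich (u : nat -> R) L B C mu : 0 <= mu < 1 ->
  (forall n, L <= u n) -> (forall n, u (S n) <= B + C * mu ^ n) ->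
  L <= real (Lim_seq u) /\ real (Lim_seq u) <= B.
Proof.
  intros Hmu HL HB.
  assert (H1 : Rbar_le (Lim_seq (fun _ => L)) (Lim_seq u)).
  { apply Lim_seq_le_loc. exists 0%nat. intros; apply HL. }
  rewrite Lim_seq_const in H1.
  assert (H2 : Rbar_le (Lim_seq (fun n => u (S n))) (Lim_seq (fun n => B + C * mu ^ n))).
  { apply Lim_seq_le_loc. exists 0%nat. intros; apply HB. }
  rewrite Lim_seq_incr_1 in H2.
  assert (H3 : Lim_seq (fun n => B + C * mu ^ n) = B).
  { apply is_lim_seq_unique. replace (Finite B) with (Finite (B + C * 0)) by (f_equal; ring).
    apply is_lim_seq_plus'. apply is_lim_seq_const. apply (is_lim_seq_scal_l _ C 0). apply is_lim_seq_geom.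
    rewrite Rabs_pos_eq; lra. }
  rewrite H3 in H2.
  destruct (Lim_seq u) as [l| |]; simpl in *; try contradiction; lra.
Qed.

Lemma bern tau n : 1 <= tau -> 1 + INR n * (tau - 1) <= tau ^ n.
Proof.
  intros H. induction n as [|n IH]; [simpl; lra|].
  rewrite S_INR. simpl pow. assert (0 <= INR n) by apply pos_INR.
  assert (tau * (1 + INR n * (tau - 1)) <= tau * tau ^ n) by (apply Rmult_le_compat_l; lra).
  assert (0 <= INR n * ((tau - 1) * (tau - 1))) by (apply Rmult_le_pos; [lra| nra]).
  nra.
Qed.

Lemma gn1_le tau K : 1 < tau -> (1 <= K)%nat -> gn tau K 1 <= / INR K.
Proof.
  intros Ht HK. destruct (Nat.eq_dec K 1) as [->|HK2].
  - unfold gn. simpl. lra.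
  - rewrite gn_form by (first [lra|lia]). pose proof (bern tau K ltac:(lra)).
    assert (1 < INR K) by (replace 1 with (INR 1) by reflexivity; apply lt_INR; lia).
    simpl pow. rewrite Rmult_1_r.
    apply Rle_trans with ((tau - 1) / (INR K * (tau - 1))).
    + unfold Rdiv. apply Rmult_le_compat_l; [lra|]. apply Rinv_le_contravar; nra.
    + right. field. lra.
Qed.

Lemma mu_exists r : 1 < r -> exists beta mu, 1 < beta /\ 0 <= mu < 1 /\
  (forall a b, 0 <= a -> 0 <= b -> a + b = 1 -> (1 + r) / 2 * b <= a -> a / beta + b * beta <= mu).
Proof.
  intros Hr. set (th := (1 + r) / 2). assert (Hth : 1 < th) by (unfold th; lra).
  set (beta := (1 + th) / 2). exists beta, ((th / beta + beta) / (1 + th)).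
  assert (Hb : 1 < beta) by (unfold beta; lra). assert (Hb2 : beta < th) by (unfold beta; lra).
  split; [exact Hb|]. split; [split|].
  - apply Rdiv_le_0_compat; [| lra]. assert (0 < th / beta) by (apply Rdiv_lt_0_compat; lra). lra.
  - apply Rmult_lt_reg_r with (1 + th); [lra|]. unfold Rdiv. rewrite Rmult_assoc, Rinv_l by lra.
    assert (E : th / beta + beta - (1 + th) = ((beta - 1) * (beta - th)) * / beta) by (field; lra).
    assert (((beta - 1) * (beta - th)) * / beta < 0).
    { apply Rmult_neg_pos; [nra| apply Rinv_0_lt_compat; lra]. }
    rewrite Rmult_1_l. lra.
  - intros a b Ha Hbb Hab Hta.
    assert (E : a / beta + b * beta - (th / beta + beta) / (1 + th)
                = (a - th / (1 + th)) * (/ beta - beta)) by (replace b with (1 - a) by lra; field; lra).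
    assert (a - th / (1 + th) >= 0).
    { replace b with (1 - a) in Hta by lra. apply Rle_ge.
      apply Rmult_le_reg_r with (1 + th); [lra|]. unfold Rdiv. rewrite Rmult_minus_distr_r, Rmult_assoc, Rinv_l by lra. fold th in Hta. nra. }
    assert (/ beta < 1) by (replace 1 with (/1) by apply Rinv_1; apply Rinv_lt_contravar; lra).
    assert ((a - th / (1 + th)) * (/ beta - beta) <= 0) by nra. fold th. lra.
Qed.

Lemma final_bound r X K delta eps : 1 < r -> 0 < eps -> (2 <= K)%nat -> INR K < X ->
  8 * INR K / eps < X -> 0 <= delta <= 1/2 -> delta <= eps / 8 -> (/ r) ^ K < delta ->
  r / (r + 1) * ((1 - (X - INR K) / (r * X)) / (1 - ((X - INR K) / (r * X)) ^ K))
  <= (r - 1) / (r + 1) + eps / 2.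
Proof.
  intros Hr He HK HX HX2 Hd Hd2 HrK.
  assert (HK0 : 0 <= INR K) by apply pos_INR.
  assert (HX0 : 0 < X) by lra.
  set (rho := (X - INR K) / (r * X)).
  assert (Hr0 : 0 <= rho) by (unfold rho; apply Rdiv_le_0_compat; nra).
  assert (Hr1 : rho <= / r).
  { assert (E : / r - rho = INR K / (r * X)) by (unfold rho; field; lra).
    assert (0 <= INR K / (r * X)) by (apply Rdiv_le_0_compat; nra). lra. }
  assert (HrK2 : rho ^ K <= (/ r) ^ K) by (apply pow_incr; lra).
  set (c := 1 - rho ^ K).
  assert (Hc : 1 - delta <= c) by (unfold c; lra).
  set (L := (r - 1) / (r + 1)).
  assert (HL : 0 <= L <= 1).
  { unfold L. split; [apply Rdiv_le_0_compat; lra|].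
    apply Rmult_le_reg_r with (r + 1); [lra|]. unfold Rdiv. rewrite Rmult_assoc, Rinv_l; lra. }
  set (t := INR K / ((r + 1) * X)).
  assert (Et : r / (r + 1) * (1 - rho) = L + t) by (unfold rho, L, t; field; lra).
  assert (Ht : t <= eps / 8).
  { unfold t. assert (8 * INR K < eps * X).
    { apply Rmult_lt_reg_r with (/ eps). apply Rinv_0_lt_compat; lra.
      replace (eps * X * / eps) with X by (field; lra). exact HX2. }
    apply Rmult_le_reg_r with ((r + 1) * X); [nra|]. unfold Rdiv. rewrite Rmult_assoc, Rinv_l by nra. nra. }
  assert (Ht0 : 0 <= t) by (unfold t; apply Rdiv_le_0_compat; nra).
  replace (r / (r + 1) * ((1 - rho) / c)) with ((L + t) / c) by (rewrite <- Et; field; lra).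
  apply Rmult_le_reg_r with c; [lra|]. unfold Rdiv. rewrite Rmult_assoc, Rinv_l by lra.
  rewrite Rmult_1_r.
  assert ((L + eps / 2) * (1 - delta) <= (L + eps / 2) * c) by (apply Rmult_le_compat_l; lra).
  nra.
Qed.

Theorem lemma3 (r : R) (hr : 1 < r) :
  is_lim_seq (fun x : nat => q r (S x) (S x)) ((r - 1) / (r + 1)).
Proof.
  destruct (mu_exists r hr) as [beta [mu [Hb [Hmu Hmu']]]].
  set (th := (1 + r) / 2) in *.
  assert (Hth : 1 < th) by (unfold th; lra).
  assert (Hthr : th <= r) by (unfold th; lra).
  assert (Hir : 0 < / r < 1) by (split; [apply Rinv_0_lt_compat; lra| replace 1 with (/ 1) by apply Rinv_1; apply Rinv_lt_contravar; lra]).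
  apply is_lim_seq_spec. intros eps.
  set (e := pos eps). assert (He : 0 < e) by apply cond_pos.
  set (delta := Rmin (1/2) (e/8)).
  assert (Hd : 0 < delta) by (unfold delta; apply Rmin_pos; lra).
  assert (Hd1 : delta <= 1/2) by apply Rmin_l.
  assert (Hd2 : delta <= e/8) by apply Rmin_r.
  destruct (pow_lt_1_zero (/ r) ltac:(rewrite Rabs_pos_eq; lra) delta Hd) as [N0 HN0].
  set (K := Nat.max N0 2).
  assert (HK2 : (2 <= K)%nat) by (unfold K; lia).
  assert (HrK : (/ r) ^ K < delta).
  { specialize (HN0 K ltac:(unfold K; lia)). rewrite Rabs_pos_eq in HN0; [exact HN0|].
    apply pow_le; lra. }
  destruct (archimed_cor1 (e/4) ltac:(lra)) as [K' [HK'1 HK'2]].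
  assert (HK0 : 0 <= INR K) by apply pos_INR.
  assert (HK'0 : 0 < INR K') by (apply lt_0_INR; lia).
  set (A := INR K + (1 + r) * INR K' / (r - 1) + 8 * INR K / e).
  assert (HA1 : 0 <= (1 + r) * INR K' / (r - 1)) by (apply Rdiv_le_0_compat; nra).
  assert (HA2 : 0 <= 8 * INR K / e) by (apply Rdiv_le_0_compat; nra).
  destruct (proj2 (is_lim_seq_spec INR p_infty) is_lim_seq_INR A) as [N1 HN1].
  exists N1. intros x Hx.
  set (X := INR (S x)).
  assert (HXA : A < X) by (unfold X; rewrite S_INR; specialize (HN1 x Hx); lra).
  assert (HX1 : INR K < X) by (unfold A in HXA; lra).
  assert (HX2 : (1 + r) * INR K' / (r - 1) < X) by (unfold A in HXA; lra).
  assert (HX3 : 8 * INR K / e < X) by (unfold A in HXA; lra).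
  assert (HX0 : 0 < X) by lra.
  set (rho := (X - INR K) / (r * X)).
  assert (Hr0 : 0 <= rho) by (unfold rho; apply Rdiv_le_0_compat; nra).
  assert (Hr1 : rho <= / r).
  { assert (E : / r - rho = INR K / (r * X)) by (unfold rho; field; lra).
    assert (0 <= INR K / (r * X)) by (apply Rdiv_le_0_compat; nra). lra. }
  assert (Hpos := posU r rho K beta mu (beta ^ K) (S x) th hr ltac:(lia) ltac:(lra) Hb
                   ltac:(lra) ltac:(apply pow_le; lra) Hthr Hmu').
  assert (Hpos' : forall n, avoid_n r n (S x + S 0) (S x) <= gp rho K 1 + mu ^ n * beta ^ K * (/ beta) ^ 1).
  { intros n. apply Hpos; [| | lia].
    - intros j Hj. rewrite pow_inv.
      replace K with ((K - j) + j)%nat by lia. rewrite pow_add.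
      rewrite Rmult_assoc, Rinv_r by (apply pow_nonzero; lra). rewrite Rmult_1_r.
      apply pow_R1_Rle; lra.
    - intros y d Hyd Hd'. rewrite plus_INR.
      assert (Hz : X <= INR y + INR (S d)) by (rewrite <- plus_INR; unfold X; apply le_INR; lia).
      assert (HdK : INR (S d) <= INR K) by (apply le_INR; lia).
      set (z := INR y + INR (S d)) in *.
      assert (E : rho * (r * z) = z - z * INR K / X) by (unfold rho; field; lra).
      rewrite E.
      assert (INR K <= z * INR K / X).
      { apply Rmult_le_reg_r with X; [lra|]. unfold Rdiv. rewrite Rmult_assoc, Rinv_l by lra. nra. }
      unfold z in *. lra. }
  assert (Hneg := negU r th beta mu K' (S x) hr ltac:(lia) Hth Hb ltac:(lra) Hmu').
  assert (Hneg' : forall n, avoid_n r n (S x) (S x + S 0) <= gn th K' 1 + mu ^ n * 1 * beta ^ 1).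
  { intros n. apply Hneg; [| lia].
    intros x' e' Hx' He'. rewrite plus_INR.
    assert (Hz : X <= INR x') by (unfold X; apply le_INR; lia).
    assert (HeK : INR (S e') <= INR K') by (apply le_INR; lia).
    assert ((1 + r) * INR K' < (r - 1) * X).
    { apply Rmult_lt_reg_r with (/ (r - 1)). apply Rinv_0_lt_compat; lra.
      replace ((r - 1) * X * / (r - 1)) with X by (field; lra). exact HX2. }
    unfold th. nra. }
  set (pr := p_right r (S x) (S x)). set (pu := p_up r (S x) (S x)).
  destruct (probs r (S x) (S x) ltac:(lra) ltac:(lia)) as [h1 [h2 h3]].
  fold pr pu in h1, h2, h3.
  set (B := pr * gp rho K 1 + pu * gn th K' 1).
  set (C := pr * (beta ^ K * (/ beta) ^ 1) + pu * (1 * beta ^ 1)).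
  assert (Hup : forall n, avoid_n r (S n) (S x) (S x) <= B + C * mu ^ n).
  { intros n. rewrite avoid_S.
    replace (Nat.eqb (S (S x)) (S x)) with false by (symmetry; apply Nat.eqb_neq; lia).
    replace (Nat.eqb (S x) (S (S x))) with false by (symmetry; apply Nat.eqb_neq; lia).
    replace (avoid_n r n (S (S x)) (S x)) with (avoid_n r n (S x + S 0) (S x)) by (f_equal; lia).
    replace (avoid_n r n (S x) (S (S x))) with (avoid_n r n (S x) (S x + S 0)) by (f_equal; lia).
    fold pr pu. specialize (Hpos' n). specialize (Hneg' n).
    apply Rle_trans with (pr * (gp rho K 1 + mu ^ n * beta ^ K * (/ beta) ^ 1)
                          + pu * (gn th K' 1 + mu ^ n * 1 * beta ^ 1)).
    - apply Rplus_le_compat; apply Rmult_le_compat_l; assumption.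
    - right. unfold B, C. ring. }
  assert (Hlow : forall n, (r - 1) / (r + 1) <= avoid_n r n (S x) (S x))
    by (intros n; apply lower_diag; [lra| lia]).
  destruct (lim_sandwich (fun n => avoid_n r n (S x) (S x)) _ B C mu Hmu Hlow Hup) as [Hq1 Hq2].
  change (q r (S x) (S x)) with (real (Lim_seq (fun n => avoid_n r n (S x) (S x)))).
  assert (Hpr : pr = r / (r + 1)).
  { unfold pr, p_right. fold X. field. repeat split; nra. }
  assert (Hpu : pu = 1 / (r + 1)) by (unfold pu, p_up; fold X; field; repeat split; nra).
  assert (HgpE : gp rho K 1 = (1 - rho) / (1 - rho ^ K)).
  { unfold gp. replace (Nat.leb K 1) with false by (symmetry; apply Nat.leb_gt; lia). now rewrite pow_1. }
  assert (HB1 : pr * gp rho K 1 <= (r - 1) / (r + 1) + e / 2).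
  { rewrite Hpr, HgpE. unfold rho. apply final_bound with (delta := delta); auto; lra. }
  assert (Hgn : gn th K' 1 <= / INR K') by (apply gn1_le; [lra| lia]).
  assert (Hgn0 : 0 <= gn th K' 1) by (apply gn_nonneg; lra).
  assert (HB2 : pu * gn th K' 1 <= e / 4).
  { assert (pu * gn th K' 1 <= 1 * gn th K' 1) by (apply Rmult_le_compat_r; lra). lra. }
  assert (HBf : B <= (r - 1) / (r + 1) + 3 * e / 4) by (unfold B; lra).
  rewrite Rabs_pos_eq; lra.
Qed.
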